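(* Let $m\ge3$ be an integer, $\beta=\frac{m+\sqrt{m^2-4}}{2}$, and let $\mathbf U=(U_k)$ be given by $U_{-1}=0$, $U_0=1$, $U_{k+1}=mU_k-U_{k-1}$ for $k\in\mathbb N$. Let $n\in\mathbb N$ have $\mathbf U$-expansion $(n)_{\mathbf U}=a_Na_{N-1}\cdots a_1a_0$. Then the $\mathbf U$-expansion of $\lfloor n/\beta\rfloor$ is $a_Na_{N-1}\cdots a_1$ (with leading zeros removed; empty word meaning $0$), and the $\beta$-expansion of the fractional part $\{n/\beta\}$ is $$d_\beta(\{n/\beta\})=a_0a_1\cdots a_{N-1}a_N0^\omega.$$
   Context: $\mathbf U$-expansion: for $n\ge1$, $(n)_{\mathbf U}=a_N\cdots a_0$ is the unique string of non-negative integers with $a_N\ne0$, $n=\sum_{k=0}^N a_kU_k$ and $\sum_{k=0}^i a_kU_k<U_{i+1}$ for all $i\le N$ (the greedy representation); equivalently, a string over $\{0,\dots,m-1\}$ with nonzero leading digit not containing any factor $(m-1)(m-2)^{j}(m-1)$, $j\ge0$. The expansion of $0$ is the empty word. $\beta$-expansion: for $x\in[0,1)$, with $T_\beta(x)=\beta x-\lfloor\beta x\rfloor$, $d_\beta(x)=(x_i)_{i\ge1}$ where $x_i=\lfloor\beta T_\beta^{i-1}(x)\rfloor$, so that $x=\sum_{i\ge1}x_i\beta^{-i}$. *)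

(* Defs.v *)
From mathcomp Require Import all_boot all_order all_algebra.
From mathcomp Require Import reals.
Set Implicit Arguments. Unset Strict Implicit. Unset Printing Implicit Defensive.
Import Order.TTheory GRing.Theory Num.Theory.

(* U-sequence: U_{-1} = 0, U_0 = 1, U_{k+1} = m U_k - U_{k-1}.
   Uaux m k = (U_{k-1}, U_k). For m >= 3 the sequence is increasing, so the
   truncated subtraction of nat never truncates. *)
Fixpoint Uaux (m k : nat) : nat * nat :=
  match k with
  | 0 => (0, 1)
  | k'.+1 => let p := Uaux m k' in (p.2, m * p.2 - p.1)
  end.
Definition U (m k : nat) : nat := (Uaux m k).2.

(* A digit word a_N ... a_0 is represented LITTLE-ENDIAN as the list
   [:: a_0; a_1; ...; a_N]. [is_Uexp m n s] : s is the (greedy)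
   U-expansion of n: the last (leading) digit is nonzero (s = [::] for n = 0),
   n = sum_k a_k U_k, and sum_{k<=i} a_k U_k < U_{i+1} for all i <= N. *)
Definition is_Uexp (m n : nat) (s : seq nat) : Prop :=
  [/\ last 1 s != 0,
      n = \sum_(k < size s) nth 0 s k * U m k
    & forall i, i < size s -> \sum_(k < i.+1) nth 0 s k * U m k < U m i.+1].

Local Open Scope ring_scope.

Definition beta {R : realType} (m : nat) : R :=
  (m%:R + Num.sqrt (m%:R ^+ 2 - 4)) / 2.

Definition Tb {R : realType} (b x : R) : R := b * x - (Num.floor (b * x))%:~R.

(* i-th digit (i >= 1) of the beta-expansion d_beta(x):
   x_i = floor(beta * T_beta^{i-1}(x)). *)
Definition beta_digit {R : realType} (b x : R) (i : nat) : int :=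
  Num.floor (b * iter i.-1 (Tb b) x).

Definition fracpart {R : realType} (x : R) : R := x - (Num.floor x)%:~R.

(* Main.v *)
Require Import Defs.
From mathcomp Require Import all_boot all_order all_algebra.
From mathcomp Require Import reals.
From mathcomp Require Import zify ring lra.
Import Order.TTheory GRing.Theory Num.Theory.
Set Implicit Arguments. Unset Strict Implicit.
Section NatPart.
Variable m : nat.
Hypothesis m3 : (3 <= m)%N.

Lemma Uaux_mono k : ((Uaux m k).1 <= (Uaux m k).2)%N.
Proof.
elim: k => [//|k IH] /=.
have : (2 * (Uaux m k).2 <= m * (Uaux m k).2)%N by apply: leq_mul; lia.
lia.
Qed.

Lemma Urec1 k : (U m k.+1 + (Uaux m k).1 = m * U m k)%N.
Proof.
rewrite /U /=. have := Uaux_mono k.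
have : (2 * (Uaux m k).2 <= m * (Uaux m k).2)%N by apply: leq_mul; lia.
lia.
Qed.

Lemma Upos k : (0 < U m k)%N.
Proof.
elim: k => [//|k IH]. have := Urec1 k. have := Uaux_mono k. rewrite /U.
have : (2 * (Uaux m k).2 <= m * (Uaux m k).2)%N by apply: leq_mul; lia.
rewrite /U in IH. lia.
Qed.

Lemma Urec k : (U m k.+2 + U m k = m * U m k.+1)%N.
Proof. exact: (Urec1 k.+1). Qed.

Lemma Ule k : (U m k.+1 <= m * U m k)%N.
Proof. have := Urec1 k. lia. Qed.

End NatPart.
Arguments Uaux_mono {m}. Arguments Urec1 {m}. Arguments Upos {m}. Arguments Urec {m}. Arguments Ule {m}.

Fixpoint okA (m : nat) (l : seq nat) : bool :=
  match l with [::] => true | a :: l' => (a <= m - 3)%N || ((a == m - 2) && okA m l') end.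
Fixpoint adm (m : nat) (l : seq nat) : bool :=
  match l with [::] => true | a :: l' => [&& (a <= m - 1)%N, (a == m - 1) ==> okA m l' & adm m l'] end.

Section Comb.
Variable m : nat.
Hypothesis m3 : (3 <= m)%N.
Variable s : seq nat.
Definition P i := (\sum_(k < i.+1) nth 0 s k * U m k)%N.
Hypothesis hs : forall i, (i < size s)%N -> (P i < U m i.+1)%N.

Lemma PS i : P i.+1 = (P i + nth 0 s i.+1 * U m i.+1)%N.
Proof. by rewrite /P big_ord_recr. Qed.

Lemma Pge i : (nth 0 s i * U m i <= P i)%N.
Proof. case: i => [|i]; first by rewrite /P big_ord1. rewrite PS; lia. Qed.

Lemma digit_bound i : (i < size s)%N -> (nth 0 s i < m)%N.
Proof.
move=> hi. have h1 := hs hi. have h2 := Pge i. have h3 := Ule m3 i.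
have h4 := Upos m3 i.
rewrite -(ltn_pmul2r h4). lia.
Qed.

Lemma danger i j : (i < size s)%N -> (j <= i)%N -> nth 0 s j = (m - 1)%N ->
  (forall k, (j < k <= i)%N -> nth 0 s k = (m - 2)%N) -> (U m i.+1 <= P i + U m i)%N.
Proof.
elim: i => [|i IH] hi hji hj hk.
  have hj0 : j = 0%N by lia. rewrite hj0 in hj.
  have h2 := Pge 0. rewrite hj in h2. have h3 := Ule m3 0.
  have : ((m - 1) * U m 0 + U m 0 = m * U m 0)%N.
    by rewrite -{2}(mul1n (U m 0)) -mulnDl; congr (_ * _); lia.
  lia.
case: (ltnP j i.+1) => hji'.
  have := IH ltac:(lia) ltac:(lia) hj ltac:(move=> k hk'; apply: hk; lia).
  rewrite PS (hk i.+1 ltac:(lia)). have := Urec m3 i.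
  set X := U m i.+1.
  have : ((m - 2) * X + 2 * X = m * X)%N.
    by rewrite -mulnDl; congr (_ * _); lia.
  lia.
have hji1 : j = i.+1 by lia. rewrite hji1 in hj.
rewrite PS hj.
have := Urec m3 i. set X := U m i.+1.
have : ((m - 1) * X + X = m * X)%N.
  by rewrite -{2}(mul1n X) -mulnDl; congr (_ * _); lia.
lia.
Qed.

Lemma drop_cons i a l : drop i s = a :: l -> [/\ (i < size s)%N, nth 0 s i = a & drop i.+1 s = l].
Proof.
move=> h. have hi : (i < size s)%N.
  by rewrite ltnNge; apply/negP => /drop_oversize; rewrite h.
by move: h; rewrite (drop_nth 0 hi) => -[-> ->].
Qed.

Lemma okA_drop l : forall i j, drop i.+1 s = l -> (i < size s)%N -> (j <= i)%N ->
  nth 0 s j = (m - 1)%N ->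
  (forall k, (j < k <= i)%N -> nth 0 s k = (m - 2)%N) -> okA m l.
Proof.
elim: l => [//|a l IH] i j hd hi hji hj hk /=.
have [hi' ha hd'] := drop_cons hd.
have hb := digit_bound hi'.
case: (leqP a (m-3)) => //= ha3.
case: (eqVneq a (m-2)) => ha2 /=.
  apply: (IH i.+1 j hd' ltac:(lia) ltac:(lia) hj).
  move=> k hk'. case: (ltnP k i.+1) => hk2; first by apply: hk; lia.
  have -> : k = i.+1 by lia. by rewrite ha ha2.
exfalso. have h1 := hs hi'. have h2 := danger hi hji hj hk.
rewrite PS ha in h1. have := Urec m3 i.
have ham : a = (m-1)%N by lia. rewrite ham in h1.
set X := U m i.+1 in h1 *.
have : ((m - 1) * X + X = m * X)%N.
  by rewrite -{2}(mul1n X) -mulnDl; congr (_ * _); lia.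
lia.
Qed.

Lemma adm_drop l : forall i, drop i s = l -> adm m l.
Proof.
elim: l => [//|a l IH] i hd /=.
have [hi ha hd'] := drop_cons hd.
have hb := digit_bound hi.
apply/and3P; split; first lia; last exact: (IH i.+1).
apply/implyP => /eqP ha1.
apply: (okA_drop hd' hi (leqnn i)); first by rewrite ha.
move=> k; lia.
Qed.

End Comb.

Local Open Scope ring_scope.

Lemma floor_nat_add (R : realType) (a : nat) (v : R) : 0 <= v < 1 -> Num.floor (a%:R + v) = a%:Z.
Proof.
case/andP=> h0 h1. apply: floor_def. rewrite intrD.
have -> : ((a%:Z)%:~R : R) = a%:R by [].
apply/andP; split; lra.
Qed.

Section Real.
Variable R : realType.
Variable m : nat.
Hypothesis m3 : (3 <= m)%N.
Let M : R := m%:R.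
Let b : R := beta m.
Let c : R := M - b.

Lemma M3 : 3 <= M.
Proof. by rewrite /M ler_nat. Qed.

Lemma bprops : b * b = M * b - 1 /\ M - 1 < b.
Proof.
have hM := M3.
rewrite /b /beta -/M.
set r := Num.sqrt _.
have r0 : 0 <= r by apply: sqrtr_ge0.
have r2 : r * r = M ^+ 2 - 4.
  by rewrite -expr2 sqr_sqrtr // subr_ge0; nra.
split; first nra.
have : M - 2 < r by nra.
lra.
Qed.

Lemma bq : b * b = M * b - 1. Proof. by case: bprops. Qed.
Lemma bgt : M - 1 < b. Proof. by case: bprops. Qed.
Lemma cb : c * b = 1. Proof. rewrite /c mulrBl bq; ring. Qed.
Lemma c01 : 0 < c /\ c < 1.
Proof. have := bgt; have := cb; have := M3; rewrite /c => *. split; nra. Qed.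
Lemma binv : b^-1 = c.
Proof.
have b0 : b != 0 by have := bgt; have := M3; move=> *; apply/eqP; lra.
by rewrite -[c]mulr1 -(mulfV b0) mulrA cb mul1r.
Qed.

Lemma Ureal k : (U m k)%:R = b * ((Uaux m k).1)%:R + c ^+ k :> R.
Proof.
elim: k => [|k IH]; first by rewrite /U /= mulr0 add0r expr0.
have h := Urec1 m3 k. have -> : (Uaux m k.+1).1 = U m k by [].
have : (U m k.+1)%:R = M * (U m k)%:R - ((Uaux m k).1)%:R :> R.
  by rewrite /M -natrM -h natrD addrK.
move=> ->. rewrite IH exprS.
have key : forall x y : R, M * (b * x + y) - x = b * (b * x + y) + (M - b) * y.
  by move=> x y; rewrite [b * (b * x + y)]mulrDr mulrA bq; ring.
exact: key.
Qed.

Definition val (l : seq nat) : R := foldr (fun a t => (a%:R + t) * c) 0 l.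

Lemma val_ge0 l : 0 <= val l.
Proof.
have [c0 _] := c01. elim: l => [|a l IH] /=; first by [].
apply: mulr_ge0; last lra. by apply: addr_ge0.
Qed.

Lemma mulc_lt x t : x < t * b -> x * c < t.
Proof.
move=> h. have hc := cb. have [c0 _] := c01.
have : (t * b - x) * c > 0 by apply: mulr_gt0; lra.
have -> : (t * b - x) * c = t * (c * b) - x * c by ring.
rewrite hc mulr1. lra.
Qed.

Lemma natle (a k : nat) : (a + k <= m)%N -> a%:R + k%:R <= M.
Proof. by rewrite -natrD /M ler_nat. Qed.

Lemma val_lt l : adm m l -> val l < 1 /\ (okA m l -> val l < b - (M - 1)).
Proof.
have hb := bgt. have hM := M3. have hq := bq.
elim: l => [|a l IH] /=.
  split; first lra. move=> _; lra.
case/and3P => ha hao hadm. have [IH1 IH2] := IH hadm.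
have v0 := val_ge0 l.
split.
  apply: mulc_lt; rewrite mul1r.
  case: (eqVneq a (m - 1)%N) => hae.
    have := IH2 (implyP hao (introT eqP hae)).
    have := natle (a := a) (k := 1) ltac:(lia). lra.
  have := natle (a := a) (k := 2) ltac:(lia). lra.
case/orP => hA.
  apply: mulc_lt.
  have -> : (b - (M - 1)) * b = b - 1 by rewrite mulrBl hq; ring.
  have := natle (a := a) (k := 3) ltac:(lia). lra.
case/andP: hA => /eqP hae hok.
apply: mulc_lt.
have -> : (b - (M - 1)) * b = b - 1 by rewrite mulrBl hq; ring.
have := IH2 hok.
have := natle (a := a) (k := 2) ltac:(lia).
have : (M <= a%:R + 2%:R). by rewrite -natrD /M ler_nat; lia.
lra.
Qed.


Lemma sumc l : \sum_(k < size l) (nth 0%N l k)%:R * c ^+ k.+1 = val l.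
Proof.
elim: l => [|a l IH]; first by rewrite big_ord0.
rewrite /= big_ord_recl /= -IH expr1 mulrDl mulr_suml; congr (_ + _).
by apply: eq_bigr => k _; rewrite exprSr mulrA.
Qed.

Lemma decomp (l : seq nat) t :
  (\sum_(k < t) nth 0%N l k * U m k)%N%:R * c =
  \sum_(k < t) (nth 0%N l k)%:R * ((Uaux m k).1)%:R
  + \sum_(k < t) (nth 0%N l k)%:R * c ^+ k.+1 :> R.
Proof.
rewrite natr_sum mulr_suml -big_split /=.
apply: eq_bigr => k _. rewrite natrM Ureal exprSr.
have hc := cb.
have -> : (nth 0%N l k)%:R * (b * ((Uaux m k).1)%:R + c ^+ k) * c
  = (nth 0%N l k)%:R * ((Uaux m k).1)%:R * (c * b) + (nth 0%N l k)%:R * (c ^+ k * c) by ring.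
by rewrite hc mulr1.
Qed.

Lemma shiftU (l : seq nat) t :
  \sum_(k < t.+1) (nth 0%N l k)%:R * ((Uaux m k).1)%:R =
  (\sum_(k < t) nth 0%N (behead l) k * U m k)%N%:R :> R.
Proof.
rewrite big_ord_recl /= mulr0 add0r natr_sum.
apply: eq_bigr => k _. by rewrite natrM nth_behead.
Qed.

Lemma Tb_val l : adm m l -> Tb b (val l) = val (behead l).
Proof.
case: l => [|a l] /=.
  by move=> _; rewrite /Tb mulr0 floor0 subr0.
case/and3P => _ _ hadm.
have hv : 0 <= val l < 1 by rewrite val_ge0 (val_lt hadm).1.
rewrite /Tb.
have -> : b * ((a%:R + val l) * c) = a%:R + val l.
  by rewrite mulrC -mulrA cb mulr1.
rewrite floor_nat_add //. have -> : ((a%:Z)%:~R : R) = a%:R by []. ring.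
Qed.

Lemma adm_behead l : adm m l -> adm m (behead l).
Proof. by case: l => [//|a l] /= /and3P[]. Qed.

Lemma iter_Tb j : forall l, adm m l -> iter j (Tb b) (val l) = val (drop j l).
Proof.
elim: j => [|j IH] l hl; first by rewrite drop0.
rewrite iterSr Tb_val // IH; last exact: adm_behead.
by case: l {hl}.
Qed.

Lemma main n s : is_Uexp m n s ->
  (exists q : nat, Num.floor (n%:R / b) = q%:Z /\ is_Uexp m q (behead s)) /\
  (forall i : nat, (1 <= i)%N ->
      beta_digit b (fracpart (n%:R / b)) i = (nth 0%N s i.-1)%:Z).
Proof.
case=> hlast hn hpre.
have hadmd : forall j l, drop j s = l -> adm m l.
  by move=> j l hd; exact: (adm_drop m3 hpre hd).
have hadm : adm m s by apply: (hadmd 0%N); rewrite drop0.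
set q := (\sum_(k < size (behead s)) nth 0%N (behead s) k * U m k)%N.
have [hx1 _] := val_lt hadm. have hx0 := val_ge0 s.
have E : n%:R / b = q%:R + val s.
  rewrite binv hn decomp sumc. congr (_ + _).
  rewrite /q; case: (s) => [|a l]; first by rewrite !big_ord0.
  exact: shiftU.
have F : Num.floor (n%:R / b) = q%:Z.
  by rewrite E floor_nat_add // hx0 hx1.
split.
  exists q. split => //. split => //.
    by move: hlast; case: (s) => [|a [|a' l]].
  move=> i hi.
  have hi' : (i.+1 < size s)%N by rewrite size_behead in hi; lia.
  have h := hpre _ hi'.
  have D := decomp s i.+2. rewrite shiftU in D.
  move: D h.
  set S' := (\sum_(k < i.+1) _)%N.
  set N := (\sum_(k < i.+2) _)%N.
  move=> D h.
  rewrite -(ltr_nat R).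
  have Y0 : 0 <= \sum_(k < i.+2) (nth 0%N s k)%:R * c ^+ k.+1.
    apply: sumr_ge0 => k _; apply: mulr_ge0 => //; apply: exprn_ge0.
    by have [] := c01; lra.
  have [c0 c1] := c01.
  have hN : N%:R + 1 <= (U m i.+2)%:R :> R.
    by rewrite natr1 ler_nat.
  have h1 : N%:R * c <= ((U m i.+2)%:R - 1) * c.
    by apply: ler_wpM2r; lra.
  have h2 : ((U m i.+2)%:R - 1) * c = (U m i.+1)%:R + (c ^+ i.+2 - 1) * c.
    rewrite (Ureal i.+2). change (Uaux m i.+2).1 with (U m i.+1).
    have hc := cb.
    have -> : (b * (U m i.+1)%:R + c ^+ i.+2 - 1) * c
      = (U m i.+1)%:R * (c * b) + (c ^+ i.+2 - 1) * c by ring.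
    by rewrite hc mulr1.
  have h3 : c ^+ i.+2 < 1 by apply: exprn_ilt1 => //; lra.
  have h4 : (c ^+ i.+2 - 1) * c < 0 by rewrite pmulr_llt0 //; lra.
  lra.
move=> i hi.
rewrite /fracpart F E.
have -> : q%:R + val s - ((q%:Z)%:~R : R) = val s.
  have -> : ((q%:Z)%:~R : R) = q%:R by []. ring.
rewrite /beta_digit iter_Tb //.
rewrite -[X in nth _ _ X]addn0 -nth_drop.
case hd: (drop i.-1 s) => [|a l] /=.
  by rewrite mulr0 floor0.
have := hadmd _ _ hd => /= /and3P[_ _ hl].
have -> : b * ((a%:R + val l) * c) = a%:R + val l.
  by rewrite mulrC -mulrA cb mulr1.
by rewrite floor_nat_add // val_ge0 (val_lt hl).1.
Qed.

End Real.

Unset Implicit Arguments.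

Theorem proposition3 (R : realType) (m n : nat) (s : seq nat) :
  (3 <= m)%N ->
  is_Uexp m n s ->
  (exists q : nat,
      Num.floor (n%:R / beta m : R) = q%:Z /\ is_Uexp m q (behead s)) /\
  (forall i : nat, (1 <= i)%N ->
      beta_digit (beta m : R) (fracpart (n%:R / beta m)) i = (nth 0%N s i.-1)%:Z).
Proof.
move=> hm hs. exact: (@main R m hm n s hs).
Qed.
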